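(* Let $\mathsf{X}$ be a retract of a qcb-space $\mathsf{Y}$. If $\mathsf{Y}$ satisfies Normann's condition, then so does $\mathsf{X}$.
   Context: A qcb-space is a topological quotient of a countably based space. $\mathsf{X}$ is a retract of $\mathsf{Y}$ if there are continuous $e\colon\mathsf{X}\to\mathsf{Y}$ and $r\colon\mathsf{Y}\to\mathsf{X}$ with $r\circ e=\mathrm{id}_{\mathsf{X}}$. A subset $A$ of a space $Z$ is functionally closed if $A=\varphi^{-1}[\{0\}]$ for some continuous $\varphi\colon Z\to[0,1]$. A space satisfies Normann's condition if every functionally closed subset is an intersection of clopen sets. *)

(* Defs.v *)
From mathcomp Require Import all_boot all_order all_algebra.
From mathcomp Require Import all_classical all_reals all_analysis.
From mathcomp Require Import Rstruct Rstruct_topology.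
Import Order.TTheory GRing.Theory Num.Theory.
Local Open Scope classical_set_scope.
Local Open Scope ring_scope.

Definition quotient_map (B Y : topologicalType) (q : B -> Y) : Prop :=
  (forall y : Y, exists b : B, q b = y) /\ forall U : set Y, open U <-> open (q @^-1` U).

Definition qcb_space (Y : topologicalType) : Prop :=
  exists (B : topologicalType) (q : B -> Y),
    @second_countable B /\ @quotient_map B Y q.

Definition retract_of (X Y : topologicalType) : Prop :=
  exists (e : X -> Y) (r : Y -> X),
    continuous e /\ continuous r /\ (forall x, r (e x) = x).

Definition functionally_closed (Z : topologicalType) (A : set Z) : Prop :=
  exists phi : Z -> Rdefinitions.R,
    continuous phi /\ (forall z, 0 <= phi z <= 1) /\
    A = phi @^-1` [set 0].

Definition normann_condition (Z : topologicalType) : Prop :=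
  forall A : set Z, @functionally_closed Z A ->
    exists F : set (set Z), (forall C, F C -> clopen C) /\
      A = \bigcap_(C in F) C.

(* Main.v *)
Require Import Defs.
From mathcomp Require Import all_boot all_order all_algebra.
From mathcomp Require Import all_classical all_reals all_analysis.
From mathcomp Require Import Rstruct Rstruct_topology.
Local Open Scope classical_set_scope.

Theorem lemma4p1 (X Y : topologicalType) :
  qcb_space Y -> retract_of X Y -> normann_condition Y -> normann_condition X.
Proof.
move=> _ [e [r [ce [cr re]]]] NY A [phi [cphi [bphi ->]]].
have [F [Fcl HF]] : exists F : set (set Y), (forall C, F C -> clopen C) /\
    (phi \o r) @^-1` [set 0%R] = \bigcap_(C in F) C.
  apply: NY; exists (phi \o r); split; first by move=> y; apply: continuous_comp; [exact: cr | exact: cphi].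
  by split => // y; exact: bphi.
exists [set D | exists2 C, F C & D = e @^-1` C]; split.
  move=> D [C FC ->]; have [oC cC] := Fcl C FC; split.
    by apply: open_comp => // x _; exact: ce.
  by apply: preimage_closed => // x _; exact: ce.
apply/seteqP; split => x /=.
  move=> Hx D [C FC ->] /=.
  have : ((phi \o r) @^-1` [set 0%R]) (e x) by rewrite /= re.
  by rewrite HF; apply.
move=> Hx.
have : ((phi \o r) @^-1` [set 0%R]) (e x).
  by rewrite HF => C FC; apply: (Hx (e @^-1` C)); exists C.
by rewrite /= re.
Qed.
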